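(* Let $B \in M_m \otimes M_n$ be symmetric. Then $W^{1+i}_{\max}(B)$ equals the optimal value of the optimization problem \[ \text{maximize } \operatorname{Tr}(BX) \ \text{ subject to } \ \operatorname{Tr}(BX) = \operatorname{Tr}(BX^\Gamma),\ \operatorname{Tr}(X) = 1,\ X \succeq 0, \] over real symmetric matrices $X \in M_m\otimes M_n$, and it also equals the optimal value of \[ \text{minimize } c \ \text{ subject to } \ pB + (1-p)B^\Gamma \preceq cI, \] over $c, p \in \mathbb{R}$.
   Context: $M_n$ denotes real $n\times n$ matrices and $M_m\otimes M_n$ is identified with $M_{mn}$ via the Kronecker product. For $A = \sum_j X_j \otimes Y_j \in M_m\otimes M_n$, the partial transpose is the linear map $A^\Gamma = \sum_j X_j \otimes Y_j^T$. $X\succeq 0$ means $X$ is positive semidefinite, and $S \preceq cI$ means $cI - S$ is positive semidefinite. The numerical range of a complex matrix $A\in M_N(\mathbb{C})$ is $W(A) = \{\mathbf{x}^*A\mathbf{x} : \mathbf{x}\in\mathbb{C}^N, \|\mathbf{x}\|=1\}$. Define $W^{1+i}(B) = \{c\in\mathbb{R} : c(1+i) \in W(B + iB^\Gamma)\}$; this is a nonempty compact interval, and $W^{1+i}_{\max}(B)$ denotes its maximum. *)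

(* Defs.v *)
From HB Require Import structures.
From mathcomp Require Import all_boot all_order all_algebra.
From mathcomp Require Import reals.
From mathcomp Require Import complex mxtens.
Set Implicit Arguments. Unset Strict Implicit. Unset Printing Implicit Defensive.
Import Order.TTheory GRing.Theory Num.Theory.
Local Open Scope ring_scope.
Local Open Scope complex_scope.

(* M_m (x) M_n is identified with M_(m*n) via the Kronecker product
   [tensmx] of mxtens: row/column index (i,k) <-> mxtens_index (i,k). *)

(* Partial transpose (transpose on the second tensor factor):
   A^Gamma_{(i,k),(j,l)} = A_{(i,l),(j,k)}, so (X *t Y)^Gamma = X *t Y^T. *)
Definition ptrans (R : Type) (m n : nat) (A : 'M[R]_(m * n)) : 'M[R]_(m * n) :=
  \matrix_(r, s) A (mxtens_index ((mxtens_unindex r).1, (mxtens_unindex s).2))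
                   (mxtens_index ((mxtens_unindex s).1, (mxtens_unindex r).2)).

Definition psd (R : realType) (N : nat) (X : 'M[R]_N) : Prop :=
  forall v : 'cV[R]_N, 0 <= (v^T *m X *m v) 0 0.

Definition numrange (R : realType) (N : nat) (A : 'M[R[i]]_N) : R[i] -> Prop :=
  fun z => exists x : 'cV[R[i]]_N,
    \sum_j (x j 0)^* * x j 0 = 1 /\ z = ((map_mx Num.conj x)^T *m A *m x) 0 0.

Definition cmx (R : realType) (N : nat) (A : 'M[R]_N) : 'M[R[i]]_N :=
  map_mx (fun r : R => r%:C) A.

Definition W1i (R : realType) (m n : nat) (B : 'M[R]_(m * n)) : R -> Prop :=
  fun c => numrange (cmx B + 'i *: cmx (ptrans B)) (c%:C * (1 + 'i)).

Definition is_max (R : realType) (P : R -> Prop) (w : R) : Prop :=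
  P w /\ forall t, P t -> t <= w.
Definition is_sup (R : realType) (P : R -> Prop) (w : R) : Prop :=
  (forall t, P t -> t <= w) /\ (forall u, (forall t, P t -> t <= u) -> w <= u).
Definition is_inf (R : realType) (P : R -> Prop) (w : R) : Prop :=
  (forall t, P t -> w <= t) /\ (forall u, (forall t, P t -> u <= t) -> u <= w).

Definition primal_values (R : realType) (m n : nat) (B : 'M[R]_(m * n)) : R -> Prop :=
  fun t => exists X : 'M[R]_(m * n),
    [/\ X^T = X, psd X, \tr X = 1,
        \tr (B *m X) = \tr (B *m ptrans X) & t = \tr (B *m X)].

Definition dual_values (R : realType) (m n : nat) (B : 'M[R]_(m * n)) : R -> Prop :=
  fun c => exists p : R, psd (c%:M - (p *: B + (1 - p) *: ptrans B)).

(* Main.v *)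
Require Import Defs.
From HB Require Import structures.
From mathcomp Require Import all_boot all_order all_algebra.
From mathcomp Require Import reals.
From mathcomp Require Import complex mxtens.
From mathcomp Require Import ring lra.
From mathcomp Require Import boolp classical_sets set_interval topology normedtype derive.
Set Implicit Arguments. Unset Strict Implicit. Unset Printing Implicit Defensive.
Import Order.TTheory GRing.Theory Num.Theory.
Import numFieldNormedType.Exports.
Local Open Scope ring_scope.

Section QF.
Variable R : realType.
Variable N : nat.
Implicit Types (M Q X : 'M[R]_N) (u v w : 'cV[R]_N).

Definition bf M u v := (u^T *m M *m v) 0 0.
Definition qf M v := bf M v v.

Lemma bfE M u v : bf M u v = \sum_i \sum_j u i 0 * M i j * v j 0.
Proof.
rewrite /bf mxE; under eq_bigr => j _ do rewrite mxE mulr_suml.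
rewrite exchange_big /=; apply: eq_bigr => i _; apply: eq_bigr => j _.
by rewrite !mxE.
Qed.

Lemma bfDl M u1 u2 v : bf M (u1 + u2) v = bf M u1 v + bf M u2 v.
Proof. by rewrite /bf linearD /= !mulmxDl mxE. Qed.
Lemma bfDr M u v1 v2 : bf M u (v1 + v2) = bf M u v1 + bf M u v2.
Proof. by rewrite /bf mulmxDr mxE. Qed.
Lemma bfZl M a u v : bf M (a *: u) v = a * bf M u v.
Proof. by rewrite /bf linearZ /= -!scalemxAl mxE. Qed.
Lemma bfZr M a u v : bf M u (a *: v) = a * bf M u v.
Proof. by rewrite /bf -!scalemxAr mxE. Qed.
Lemma bfMD M1 M2 u v : bf (M1 + M2) u v = bf M1 u v + bf M2 u v.
Proof. by rewrite /bf mulmxDr mulmxDl mxE. Qed.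
Lemma bfMN M u v : bf (- M) u v = - bf M u v.
Proof. by rewrite /bf mulmxN mulNmx mxE. Qed.
Lemma bfMZ a M u v : bf (a *: M) u v = a * bf M u v.
Proof. by rewrite /bf -scalemxAr -scalemxAl mxE. Qed.
Lemma bfC M u v : M^T = M -> bf M u v = bf M v u.
Proof.
move=> sM; rewrite /bf.
have E (A : 'M[R]_1) : A 0 0 = A^T 0 0 by rewrite mxE.
rewrite E.
by rewrite !trmx_mul trmxK sM mulmxA.
Qed.
Lemma bf_delta M i j : bf M (delta_mx i 0) (delta_mx j 0) = M i j.
Proof.
rewrite /bf trmx_delta -rowE -colE.
by rewrite !mxE.
Qed.
Lemma bf0r M u : bf M u 0 = 0.
Proof. by rewrite /bf mulmx0 mxE. Qed.
Lemma bf0l M u : bf M 0 u = 0.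
Proof. by rewrite /bf trmx0 mul0mx mul0mx mxE. Qed.

Lemma qfZ M a v : qf M (a *: v) = a ^+ 2 * qf M v.
Proof. by rewrite /qf bfZl bfZr mulrA expr2. Qed.
Lemma qf0 M : qf M 0 = 0.
Proof. by rewrite /qf bf0l. Qed.
Lemma qfD M u v : M^T = M -> qf M (u + v) = qf M u + qf M v + 2 * bf M u v.
Proof.
move=> sM; rewrite /qf bfDl !bfDr (@bfC M v u sM); ring.
Qed.

Definition psdq M := forall v : 'cV[R]_N, 0 <= qf M v.

Lemma psd_diag M i : psdq M -> 0 <= M i i.
Proof. by move=> /(_ (delta_mx i 0)); rewrite /qf bf_delta. Qed.

Lemma psd_offdiag M i j : M^T = M -> psdq M -> M i i = 0 -> M i j = 0.
Proof.
move=> sM pM Mii; case: (eqVneq i j) => [<-//|ij].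
have Mji : M j i = M i j by rewrite -{1}sM mxE.
have Hq t : 0 <= M j j + 2 * t * M i j.
  have := pM (delta_mx j 0 + t *: delta_mx i 0).
  rewrite qfD // qfZ bfZr /qf !bf_delta Mii Mji; lra.
apply/eqP; apply/negPn/negP => nz.
have := Hq (- (M j j + 1) / (2 * M i j)).
have -> : 2 * (- (M j j + 1) / (2 * M i j)) * M i j = - (M j j + 1).
  by field.
lra.
Qed.


Lemma mx11M (A : 'M[R]_1) (B : 'M[R]_1) : (A *m B) 0 0 = A 0 0 * B 0 0.
Proof. by rewrite mxE big_ord1. Qed.

Lemma bf_outer (a : 'cV[R]_N) u v : bf (a *m a^T) u v = (u^T *m a) 0 0 * (a^T *m v) 0 0.
Proof. by rewrite /bf !mulmxA -mx11M -!mulmxA. Qed.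

Lemma tr1 (A : 'M[R]_1) : \tr A = A 0 0.
Proof. by rewrite /mxtrace big_ord1. Qed.

Lemma tr_outer M (a : 'cV[R]_N) : \tr (M *m (a *m a^T)) = qf M a.
Proof. by rewrite mulmxA mxtrace_mulC mulmxA tr1. Qed.

Lemma psd0 M : M^T = M -> psdq M -> (forall i, M i i = 0) -> M = 0.
Proof.
move=> sM pM H; apply/matrixP => i j; rewrite mxE; exact: psd_offdiag.
Qed.

Lemma tr_psd_ge0 Q X : Q^T = Q -> psdq Q -> psdq X -> 0 <= \tr (Q *m X).
Proof.
move=> sQ pQ pX.
have [k Hk] : exists k, (#|[set i | Q i i != 0%R]| <= k)%N.
  by exists #|[set i | Q i i != 0%R]|.
elim: k Q sQ pQ Hk => [|k IH] Q sQ pQ Hk.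
  rewrite (psd0 sQ pQ) ?mul0mx ?mxtrace0 // => i.
  rewrite leqn0 cards_eq0 in Hk.
  by apply/eqP; apply/negPn/negP => nz; move/eqP/setP/(_ i): Hk; rewrite !inE nz.
case: (pickP [pred i | Q i i != 0]) => [i /= Hi | H0]; last first.
  rewrite (psd0 sQ pQ) ?mul0mx ?mxtrace0 // => j.
  by apply/eqP; move/negbT: (H0 j); rewrite negbK.
set d := Q i i.
have d0 : 0 < d by rewrite lt_def Hi psd_diag.
set q := col i Q.
set P := q *m q^T.
set Q' := Q - d^-1 *: P.
have sP : P^T = P by rewrite /P trmx_mul trmxK.
have sQ' : Q'^T = Q' by rewrite /Q' linearB /= linearZ /= sP sQ.
have qE : q = Q *m delta_mx i 0 by rewrite /q colE.
have bq1 v : (v^T *m q) 0 0 = bf Q v (delta_mx i 0) by rewrite qE mulmxA.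
have bq2 v : (q^T *m v) 0 0 = bf Q (delta_mx i 0) v.
  by rewrite qE trmx_mul sQ trmx_delta /bf trmx_delta.
have qfQ' v : qf Q' v = qf Q v - d^-1 * (bf Q (delta_mx i 0) v) ^+ 2.
  rewrite /qf /Q' bfMD bfMN bfMZ /P bf_outer bq1 bq2 (@bfC Q v _ sQ) expr2 //.
have pQ' : psdq Q'.
  move=> v; rewrite qfQ'.
  set s := bf Q (delta_mx i 0) v.
  have := pQ (v + (- (s / d)) *: delta_mx i 0).
  rewrite qfD // qfZ bfZr /qf bf_delta -/d (@bfC Q v _ sQ) -/s.
  have -> : qf Q v + (- (s / d)) ^+ 2 * d + 2 * (- (s / d) * s) =
            qf Q v - d^-1 * s ^+ 2.
    by field; rewrite gt_eqF.
  by [].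
have Q'jj j : Q' j j = Q j j - d^-1 * Q j i ^+ 2.
  by rewrite /Q' !mxE big_ord1 !mxE expr2.
have sub : [set j | Q' j j != 0] \subset [set j | Q j j != 0] :\ i.
  apply/fintype.subsetP => j; rewrite !inE Q'jj.
  case: (eqVneq j i) => [->|ji] /=.
    by rewrite -/d (_ : d - d^-1 * d ^+ 2 = 0) ?eqxx //; field; rewrite gt_eqF.
  apply: contraNneq => Qjj.
  by rewrite Qjj (psd_offdiag i sQ pQ Qjj) expr2 mulr0 mulr0 subrr.
have Hk' : (#|[set j | Q' j j != 0%R]| <= k)%N.
  apply: leq_trans (subset_leq_card sub) _.
  by rewrite (cardsD1 i) inE Hi /= add1n ltnS in Hk.
have QE : Q = Q' + d^-1 *: P by rewrite /Q' subrK.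
have trP : \tr (P *m X) = qf X q.
  by rewrite /P -mulmxA mxtrace_mulC tr1.
rewrite QE mulmxDl mxtraceD -scalemxAl mxtraceZ trP.
apply: addr_ge0; first exact: IH.
by apply: mulr_ge0; [rewrite invr_ge0 ltW | exact: pX].
Qed.


Lemma psd_tr0 D : D^T = D -> psdq D -> \tr D = 0 -> D = 0.
Proof.
move=> sD pD tD; apply: psd0 => // i.
by apply: (psumr_eq0P (P := predT) _ tD) => // j _; apply: psd_diag.
Qed.

Lemma qfMN M v : qf (- M) v = - qf M v.
Proof. by rewrite /qf bfMN. Qed.

Lemma slemma A D : D^T = D -> \tr D = 0 ->
  (forall a b, qf D a + qf D b = 0 -> qf A a + qf A b <= 0) ->
  exists mu, forall v, qf A v + mu * qf D v <= 0.
Proof.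
move=> sD tD H.
have H0 v : qf D v = 0 -> qf A v <= 0.
  by move=> Dv; have := H v 0; rewrite !qf0 !addr0; apply.
have triv : (forall v, qf D v = 0) -> exists mu, forall v, qf A v + mu * qf D v <= 0.
  by move=> Z; exists 0 => v; rewrite mul0r addr0; apply: H0.
have [[v2 h2]|nN] := pselect (exists v, qf D v < 0); last first.
  apply: triv => v; have pD : psdq D.
    by move=> u; rewrite leNgt; apply/negP => hu; apply: nN; exists u.
  by rewrite (psd_tr0 sD pD tD) /qf /bf mulmx0 mul0mx mxE.
have [[v1 h1]|nP] := pselect (exists v, 0 < qf D v); last first.
  apply: triv => v; have pD : psdq (- D).
    move=> u; rewrite qfMN oppr_ge0 leNgt; apply/negP => hu; apply: nP; exists u.
    by [].
  have sD' : (- D)^T = - D by rewrite linearN /= sD.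
  have tD' : \tr (- D) = 0 by rewrite linearN /= tD oppr0.
  have := psd_tr0 sD' pD tD' => /eqP; rewrite oppr_eq0 => /eqP ->.
  by rewrite /qf /bf mulmx0 mul0mx mxE.
have ratio u1 u2 : 0 < qf D u1 -> qf D u2 < 0 ->
    qf A u1 / qf D u1 <= qf A u2 / qf D u2.
  move=> d1 d2; set a1 := qf A u1; set a2 := qf A u2.
  set e1 := qf D u1; set e2 := qf D u2.
  have r0 : 0 <= e1 / - e2 by rewrite divr_ge0 // ?ltW // oppr_gt0.
  set t := Num.sqrt (e1 / - e2).
  have := H u1 (t *: u2); rewrite !qfZ sqr_sqrtr // -/e1 -/e2 -/a1 -/a2.
  have -> : e1 / - e2 * e2 = - e1 by field; rewrite lt_eqF.
  rewrite subrr => /(_ erefl).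
  rewrite ler_pdivrMr //.
  have -> : e1 / - e2 * a2 = - (a2 / e2 * e1) by field; rewrite lt_eqF.
  lra.
pose S : set R := fun r => exists v, 0 < qf D v /\ r = qf A v / qf D v.
have S0 : (S !=set0)%classic by exists (qf A v1 / qf D v1); exists v1.
have Sub : ubound S (qf A v2 / qf D v2).
  by move=> r [v [hv ->]]; apply: ratio.
have hS : has_sup S by split => //; exists (qf A v2 / qf D v2).
exists (- sup S) => v.
have [dn|dp|dz] := ltgtP (qf D v) 0.
- have hle : sup S <= qf A v / qf D v.
    apply: ge_sup => // r [u [hu ->]]; exact: ratio.
  have := ler_wnM2r (ltW dn) hle; rewrite divfK ?lt_eqF //.
  rewrite mulNr; lra.
- have : qf A v / qf D v <= sup S.
    by apply: sup_upper_bound => //; exists v.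
  rewrite ler_pdivrMr // mulNr; lra.
- by rewrite dz mulr0 addr0; apply: H0.
Qed.

End QF.

Section PT.
Variable R : realType.
Variables m n : nat.
Local Notation N := (m * n)%N.
Implicit Types (B X : 'M[R]_N).

Lemma ptransT B : (ptrans B)^T = ptrans B^T.
Proof. by apply/matrixP => r s; rewrite !mxE. Qed.

Lemma trE (A C : 'M[R]_N) : \tr (A *m C) = \sum_r \sum_s A r s * C s r.
Proof. by apply: eq_bigr => r _; rewrite mxE. Qed.

Lemma idxE (r : 'I_N) : mxtens_index ((mxtens_unindex r).1, (mxtens_unindex r).2) = r.
Proof. by rewrite -surjective_pairing mxtens_unindexK. Qed.

Lemma ptrans_tr B X : \tr (B *m ptrans X) = \tr (ptrans B *m X).
Proof.
rewrite !trE !pair_big /=.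
pose h (p : 'I_N * 'I_N) :=
  (mxtens_index ((mxtens_unindex p.1).1, (mxtens_unindex p.2).2),
   mxtens_index ((mxtens_unindex p.2).1, (mxtens_unindex p.1).2)).
have hh : involutive h.
  by move=> [r s]; rewrite /h; cbn -[mxtens_unindex mxtens_index]; rewrite !mxtens_indexK; cbn -[mxtens_unindex mxtens_index]; rewrite !idxE.
rewrite [RHS](reindex_inj (inv_inj hh)) /=.
apply: eq_bigr => [[r s]] _; rewrite /h !mxE; cbn -[mxtens_unindex mxtens_index]; rewrite !mxtens_indexK; cbn -[mxtens_unindex mxtens_index]; rewrite !idxE.
by [].
Qed.

Lemma ptrans_trace B : \tr (ptrans B) = \tr B.
Proof. by apply: eq_bigr => r _; rewrite mxE idxE. Qed.

End PT.

Section CX.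
Variable R : realType.
Variable N : nat.
Local Open Scope complex_scope.

Lemma conjE (x : R[i]) : Num.conj x = conjc x.
Proof. by []. Qed.

Lemma term_eq (ar br as_ bs Bv Cv : R) :
  conjc (ar +i* br) * ((Bv%:C)%C + 'i%C * (Cv%:C)%C) * (as_ +i* bs) =
  ((ar * Bv * as_ + br * Bv * bs - ar * Cv * bs + br * Cv * as_) +i*
   (ar * Cv * as_ + br * Cv * bs + ar * Bv * bs - br * Bv * as_))%C.
Proof.
rewrite -[(Bv%:C)%C]/(Bv +i* 0)%C -[(Cv%:C)%C]/(Cv +i* 0)%C.
rewrite -[conjc _]/(ar +i* (- br))%C.
simpc.
apply/eqP; rewrite eq_complex /=; apply/andP; split; apply/eqP; ring.
Qed.

Lemma sumC (I : finType) (f g : I -> R) :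
  \sum_i (f i +i* g i)%C = ((\sum_i f i) +i* (\sum_i g i))%C.
Proof.
apply: (big_rec3 (fun x y z => x = (y +i* z)%C)) => // i x y z _ ->.
by simpc.
Qed.

Lemma cquad (B C : 'M[R]_N) (x : 'cV[R[i]]_N) (a b : 'cV[R]_N) :
  B^T = B -> C^T = C -> (forall j, x j 0 = (a j 0 +i* b j 0)%C) ->
  ((map_mx Num.conj x)^T *m (cmx B + 'i%C *: cmx C) *m x) 0 0 =
  ((qf B a + qf B b) +i* (qf C a + qf C b))%C.
Proof.
move=> sB sC Hx.
rewrite mxE; under eq_bigr do rewrite mxE mulr_suml.
rewrite exchange_big /=.
under eq_bigr => r _ do under eq_bigr => s _ do
  rewrite !mxE !Hx conjE term_eq.
under eq_bigr do rewrite sumC.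
rewrite sumC.
apply/eqP; rewrite eq_complex /=; apply/andP; split; apply/eqP.
- under eq_bigr do rewrite big_split /= sumrB big_split /=.
  rewrite big_split /= sumrB big_split /= -!bfE (@bfC _ _ C b a sC) /qf; ring.
- under eq_bigr do rewrite sumrB big_split /= big_split /=.
  rewrite sumrB big_split /= big_split /= -!bfE (@bfC _ _ B b a sB) /qf; ring.
Qed.

Lemma cnorm (x : 'cV[R[i]]_N) (a b : 'cV[R]_N) :
  (forall j, x j 0 = (a j 0 +i* b j 0)%C) ->
  \sum_j Num.conj (x j 0) * x j 0 = ((qf 1%:M a + qf 1%:M b) +i* 0)%C.
Proof.
move=> Hx.
have E j : Num.conj (x j 0) * x j 0 = ((a j 0 * a j 0 + b j 0 * b j 0) +i* 0)%C.
  rewrite Hx conjE -[conjc _]/(a j 0 +i* (- b j 0))%C; simpc.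
  apply/eqP; rewrite eq_complex /=; apply/andP; split; apply/eqP; ring.
under eq_bigr do rewrite E.
rewrite sumC big_split big1_eq /qf /bf !mulmx1 !mxE.
by congr (_ +i* _)%C; congr (_ + _); apply: eq_bigr => j _; rewrite mxE.
Qed.

End CX.

Section W1.
Variable R : realType.
Variables m n : nat.
Local Notation N := (m * n)%N.

Lemma W1iP (B : 'M[R]_N) c : B^T = B ->
  W1i B c <-> exists a b, [/\ qf 1%:M a + qf 1%:M b = 1,
     qf B a + qf B b = c & qf (ptrans B) a + qf (ptrans B) b = c].
Proof.
move=> sB; have sC : (ptrans B)^T = ptrans B by rewrite ptransT sB.
have cE : (c%:C * (1 + 'i%C))%C = (c +i* c)%C.
  rewrite -[(c%:C)%C]/(c +i* 0)%C -[1 : R[i]]/(1 +i* 0)%C; simpc.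
  by [].
rewrite /W1i /numrange cE; split.
- move=> [x [nx vx]].
  pose a := \col_j complex.Re (x j 0); pose b := \col_j complex.Im (x j 0).
  have Hx j : x j 0 = (a j 0 +i* b j 0)%C by rewrite !mxE; case: (x j 0).
  rewrite (cnorm Hx) in nx; rewrite (cquad sB sC Hx) in vx.
  exists a, b; split.
  + by case: nx.
  + by case: vx.
  + by case: vx.
- move=> [a [b [na va vc]]].
  pose x := \col_j (a j 0 +i* b j 0)%C.
  have Hx j : x j 0 = (a j 0 +i* b j 0)%C by rewrite mxE.
  exists x; rewrite (cnorm Hx) (cquad sB sC Hx) na va vc; split => //.
Qed.

Lemma pair_primal (B : 'M[R]_N) (a b : 'cV[R]_N) :
  let X := a *m a^T + b *m b^T in
  [/\ X^T = X, psdq X, \tr X = qf 1%:M a + qf 1%:M b,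
      \tr (B *m X) = qf B a + qf B b &
      \tr (B *m ptrans X) = qf (ptrans B) a + qf (ptrans B) b].
Proof.
move=> X.
have trX (M : 'M[R]_N) : \tr (M *m X) = qf M a + qf M b.
  by rewrite /X mulmxDr mxtraceD !tr_outer.
split.
- by rewrite /X linearD /= !trmx_mul !trmxK.
- move=> v; rewrite /qf /X bfMD !bf_outer.
  have T (u : 'cV[R]_N) : (u^T *m v) 0 0 = (v^T *m u) 0 0.
    by rewrite -[in LHS](trmxK v) -trmx_mul mxE.
  by rewrite !T addr_ge0 // -expr2 sqr_ge0.
- by rewrite -trX mul1mx.
- exact: trX.
- by rewrite ptrans_tr trX.
Qed.

End W1.

Section CP.
Local Open Scope classical_set_scope.
Variable R : realType.
Variable N : nat.

Lemma cont_sum (I : Type) (r : seq I) (h : I -> 'rV[R]_(N + N) -> R) :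
  (forall i, continuous (h i)) -> continuous (fun y => \sum_(i <- r) h i y).
Proof.
move=> hc; elim: r => [|i r IH].
  under eq_fun do rewrite big_nil; exact: cst_continuous.
under eq_fun do rewrite big_cons.
by move=> y; apply: continuousD; [exact: hc | exact: IH].
Qed.

Lemma cont_qf (M : 'M[R]_N) (g : 'I_N -> 'I_(N + N)) :
  continuous (fun y : 'rV[R]_(N + N) =>
    \sum_i \sum_j y 0 (g i) * M i j * y 0 (g j)).
Proof.
apply: cont_sum => i; apply: cont_sum => j y.
apply: (@continuousM _ _ (fun y : 'rV[R]_(N + N) => y 0 (g i) * M i j)
   (fun y : 'rV[R]_(N + N) => y 0 (g j))); last exact: coord_continuous.
apply: (@continuousM _ _ (fun y : 'rV[R]_(N + N) => y 0 (g i))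
   (fun _ => M i j)); last exact: cst_continuous.
exact: coord_continuous.
Qed.


Definition fa (y : 'rV[R]_(N + N)) : 'cV[R]_N := \col_i y 0 (lshift N i).
Definition fb (y : 'rV[R]_(N + N)) : 'cV[R]_N := \col_i y 0 (rshift N i).
Definition FF (M : 'M[R]_N) y := qf M (fa y) + qf M (fb y).

Lemma cont_F M : continuous (FF M).
Proof.
have E : FF M = (fun y : 'rV[R]_(N + N) =>
   (\sum_i \sum_j y 0 (lshift N i) * M i j * y 0 (lshift N j)) +
   (\sum_i \sum_j y 0 (rshift N i) * M i j * y 0 (rshift N j))).
  apply: funext => y; rewrite /FF /qf !bfE; congr (_ + _);
  by apply: eq_bigr => i _; apply: eq_bigr => j _; rewrite !mxE.
rewrite E => y.
apply: (@continuousD _ _ _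
  (fun y : 'rV[R]_(N + N) => \sum_i \sum_j y 0 (lshift N i) * M i j * y 0 (lshift N j))
  (fun y : 'rV[R]_(N + N) => \sum_i \sum_j y 0 (rshift N i) * M i j * y 0 (rshift N j)));
  exact: cont_qf.
Qed.

Lemma F1E y : FF 1%:M y = \sum_k y 0 k ^+ 2.
Proof.
rewrite /FF /qf /bf !mulmx1 !mxE [RHS]big_split_ord /=.
by congr (_ + _); apply: eq_bigr => i _; rewrite !mxE expr2.
Qed.

Lemma exists_max (B D : 'M[R]_N) : (0 < N)%N -> D^T = D -> \tr D = 0 ->
  exists a b, [/\ qf 1%:M a + qf 1%:M b = 1, qf D a + qf D b = 0 &
   forall a' b', qf 1%:M a' + qf 1%:M b' = 1 -> qf D a' + qf D b' = 0 ->
     qf B a' + qf B b' <= qf B a + qf B b].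
Proof.
move=> N0 sD tD.
pose A : set 'rV[R]_(N + N) := fun y => FF 1%:M y = 1 /\ FF D y = 0.
pose j (a b : 'cV[R]_N) : 'rV[R]_(N + N) := row_mx a^T b^T.
have faj a b : fa (j a b) = a by apply/colP => i; rewrite mxE row_mxEl mxE.
have fbj a b : fb (j a b) = b by apply/colP => i; rewrite mxE row_mxEr mxE.
have Fj M a b : FF M (j a b) = qf M a + qf M b by rewrite /FF faj fbj.
have cA : compact A.
  have Bc := @rV_compact R (N + N) (fun _ => `[-1, 1]%classic)
     (fun _ => @segment_compact R _ _).
  have clA : closed A.
    change (closed ((FF 1%:M) @^-1` [set x | x = 1] `&` (FF D) @^-1` [set x | x = 0])).
    apply: closedI; apply: preimage_closed.
    by move=> y _; apply: cont_F. exact: closed_eq. by move=> y _; apply: cont_F. exact: closed_eq.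
  apply: (subclosed_compact clA Bc).
  move=> y [h1 _] i /=.
  have : y 0 i ^+ 2 <= 1.
    rewrite -h1 F1E (bigD1 i) //= lerDl; apply: sumr_ge0 => k _; exact: sqr_ge0.
  rewrite in_itv /= => h; apply/andP; split; nra.
have A0 : A !=set0.
  have qe (M : 'M[R]_N) s k : qf M (s *: delta_mx k 0) = s ^+ 2 * M k k.
    by rewrite qfZ /qf bf_delta.
  have I1 k : (1%:M : 'M[R]_N) k k = 1 by rewrite mxE eqxx.
  have tD' : \sum_k D k k = 0 by [].
  suff [a0 [b0 [h1 h2]]] : exists a b : 'cV[R]_N,
      qf 1%:M a + qf 1%:M b = 1 /\ qf D a + qf D b = 0.
    by exists (j a0 b0); rewrite /A !Fj.
  have [[j1 h1]|np] := pselect (exists k, 0 < D k k).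
  - have [[j2 h2]|nn] := pselect (exists k, D k k < 0).
    + set d1 := D j1 j1 in h1 *; set d2 := D j2 j2 in h2 *.
      have dd : 0 < d1 - d2 by lra.
      exists (Num.sqrt (- d2 / (d1 - d2)) *: delta_mx j1 0).
      exists (Num.sqrt (d1 / (d1 - d2)) *: delta_mx j2 0).
      rewrite !qe !I1 -/d1 -/d2 !sqr_sqrtr; first split.
      * by field; rewrite gt_eqF.
      * by field; rewrite gt_eqF.
      * by apply: divr_ge0; lra.
      * by apply: divr_ge0; lra.
    + have nn' : forall k, predT k -> 0 <= D k k.
        by move=> k _; rewrite leNgt; apply/negP => hk; apply: nn; exists k.
      have := @psumr_eq0P _ _ predT (fun k => D k k) nn' tD' j1 isT.
      by move=> E; rewrite E ltxx in h1.
  - pose k0 := Ordinal N0.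
    have tN : \sum_k - D k k = 0 by rewrite sumrN tD' oppr0.
    have np' : forall k, predT k -> 0 <= - D k k.
      by move=> k _; rewrite oppr_ge0 leNgt; apply/negP => hk; apply: np; exists k.
    have := @psumr_eq0P _ _ predT (fun k => - D k k) np' tN k0 isT.
    move=> /eqP; rewrite oppr_eq0 => /eqP Dk0.
    by exists (1 *: delta_mx k0 0), 0; rewrite !qe !qf0 I1 Dk0; split; ring.
have [y Ay ymax] := compact_EVT_max A0 cA (continuous_subspaceT (@cont_F B)).
move: Ay; rewrite in_setE => -[h1 h2].
exists (fa y), (fb y); split => // a' b' h1' h2'.
have := ymax (j a' b'); rewrite /FF !faj !fbj; apply.
by rewrite in_setE /A !Fj.
Qed.

End CP.

Section Q.
Variable R : realType.
Variable N : nat.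
Lemma qfMD (M1 M2 : 'M[R]_N) v : qf (M1 + M2) v = qf M1 v + qf M2 v.
Proof. by rewrite /qf bfMD. Qed.
Lemma qfMB (M1 M2 : 'M[R]_N) v : qf (M1 - M2) v = qf M1 v - qf M2 v.
Proof. by rewrite /qf bfMD bfMN. Qed.
Lemma qfMZ (a : R) (M : 'M[R]_N) v : qf (a *: M) v = a * qf M v.
Proof. by rewrite /qf bfMZ. Qed.
Lemma qfS (a : R) (v : 'cV[R]_N) : qf (a%:M) v = a * qf 1%:M v.
Proof. by rewrite (_ : a%:M = a *: (1%:M : 'M[R]_N)) ?qfMZ // scalemx1. Qed.
Lemma qf1E (v : 'cV[R]_N) : qf 1%:M v = \sum_j v j 0 ^+ 2.
Proof. by rewrite /qf /bf mulmx1 mxE; apply: eq_bigr => j _; rewrite mxE expr2. Qed.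
Lemma qf1_ge0 (v : 'cV[R]_N) : 0 <= qf 1%:M v.
Proof. by rewrite qf1E sumr_ge0 // => j _; rewrite sqr_ge0. Qed.
Lemma qf1_eq0 (v : 'cV[R]_N) : qf 1%:M v = 0 -> v = 0.
Proof.
rewrite qf1E => h; apply/colP => j; rewrite mxE.
have := @psumr_eq0P _ _ predT (fun j => v j 0 ^+ 2) (fun j _ => sqr_ge0 _) h j isT.
by move/eqP; rewrite sqrf_eq0 => /eqP.
Qed.
End Q.

Unset Implicit Arguments.
Theorem mainTheorem4 (R : realType) (m n : nat) (B : 'M[R]_(m * n)) :
  (0 < m)%N -> (0 < n)%N -> B^T = B ->
  exists w : R,
    [/\ is_max (W1i B) w, is_sup (primal_values B) w & is_inf (dual_values B) w].
Proof.
move=> m0 n0 sB.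
set C := ptrans B; set D := B - C.
have sC : C^T = C by rewrite /C ptransT sB.
have sD : D^T = D by rewrite /D linearB /= sB sC.
have tD : \tr D = 0 by rewrite /D linearB /= /C ptrans_trace subrr.
have N0 : (0 < m * n)%N by rewrite muln_gt0 m0 n0.
have qD v : qf D v = qf B v - qf C v by rewrite /D qfMB.
have [a [b [h1 h2 hmax]]] := exists_max B N0 sD tD.
set w := qf B a + qf B b.
have wC : qf C a + qf C b = w by move: h2; rewrite !qD /w; lra.
have hom : forall a' b', qf D a' + qf D b' = 0 ->
    qf (B - w *: 1%:M) a' + qf (B - w *: 1%:M) b' <= 0.
  move=> a' b' hD; rewrite !qfMB !qfMZ.
  set s := qf 1%:M a' + qf 1%:M b'.
  have s0 : 0 <= s by rewrite addr_ge0 ?qf1_ge0.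
  have [sz|sp] := eqVneq s 0.
    have za : a' = 0 by apply: qf1_eq0; move: sz; rewrite /s;
      have := qf1_ge0 a'; have := qf1_ge0 b'; lra.
    have zb : b' = 0 by apply: qf1_eq0; move: sz; rewrite /s;
      have := qf1_ge0 a'; have := qf1_ge0 b'; lra.
    by rewrite za zb !qf0; lra.
  have sp' : 0 < s by rewrite lt_def sp s0.
  set t := (Num.sqrt s)^-1.
  have t2 : t ^+ 2 = s^-1 by rewrite /t exprVn sqr_sqrtr.
  have := hmax (t *: a') (t *: b'); rewrite !qfZ t2.
  have -> : s^-1 * qf 1%:M a' + s^-1 * qf 1%:M b' = 1.
    by rewrite -mulrDr mulVf.
  rewrite -!mulrDr hD mulr0 => /(_ erefl erefl).
  rewrite mulrC -/w ler_pdivrMr //.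
  move=> h; rewrite /s mulrDr in h; lra.
have [mu Hmu] := slemma sD tD hom.
set p := mu + 1.
have dualw : psd (w%:M - (p *: B + (1 - p) *: C)).
  move=> v; have := Hmu v; rewrite -[(_ *m _ *m _) 0 0]/(qf _ v).
  rewrite !qfMB qfMD !qfMZ (qfS w) /p; nra.
exists w; split.
- split.
    apply/W1iP => //; exists a, b; split => //.
  move=> t /(W1iP _ sB) [a' [b' [n1 v1 v2]]].
  rewrite -v1; apply: hmax => //; rewrite !qD; lra.
- split.
    move=> t [X [sX pX trX hX ->]].
    have sQ : (w%:M - (p *: B + (1 - p) *: C))^T = w%:M - (p *: B + (1 - p) *: C).
      by rewrite linearB linearD /= !linearZ /= sB sC tr_scalar_mx.
    have := tr_psd_ge0 sQ dualw pX.
    have -> : \tr ((w%:M - (p *: B + (1 - p) *: C)) *m X) =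
       w * \tr X - (p * \tr (B *m X) + (1 - p) * \tr (C *m X)).
      rewrite mulmxBl mulmxDl mul_scalar_mx -!scalemxAl.
      by rewrite linearB linearD /= !linearZ.
    rewrite /C -ptrans_tr -hX trX => h.
    by rewrite -mulrDl addrCA subrr addr0 mul1r mulr1 subr_ge0 in h.
  move=> u hu; apply: hu.
  have [sX pX tX tBX tCX] := pair_primal B a b.
  exists (a *m a^T + b *m b^T); split.
  + exact: sX.
  + exact: pX.
  + by rewrite tX.
  + by rewrite tBX tCX wC.
  + by rewrite tBX.
- split.
    move=> c [p' hp'].
    have := hp' a; have := hp' b.
    rewrite -[((a^T *m _) *m a) 0 0]/(qf _ a) -[((b^T *m _) *m b) 0 0]/(qf _ b).
    rewrite !qfMB !qfMD !qfMZ !(qfS c) => hb ha.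
    have := addr_ge0 ha hb.
    have -> : c * qf 1%:M a - (p' * qf B a + (1 - p') * qf C a) +
      (c * qf 1%:M b - (p' * qf B b + (1 - p') * qf C b)) =
      c * (qf 1%:M a + qf 1%:M b) - (p' * (qf B a + qf B b) + (1 - p') * (qf C a + qf C b)).
      by rewrite !mulrDr; ring.
    rewrite h1 wC -/w mulr1 -mulrDl addrCA subrr addr0 mul1r subr_ge0 //.
  by move=> u hu; apply: hu; exists p.
Qed.
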